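(* Let $X$ be a $T_1$ topological space. An ideal $I$ of $T''(X)$ is a $z$-ideal if and only if for all $f\in T''(X)$ and $g\in I$ with $Z(f)\supseteq Z(g)$ we have $f\in I$.
   Context: $C(X)$ is the ring of real-valued continuous functions on $X$; a cozero set is a set $\{x: h(x)\neq 0\}$ with $h\in C(X)$. $T''(X)$ is the ring (under pointwise operations) of all functions $f\colon X\to\mathbb{R}$ for which there is a dense cozero set $U$ of $X$ with $f|_U$ continuous. $Z(f)=\{x\in X: f(x)=0\}$. In a commutative ring $R$ with unity, $M(a)$ is the intersection of all maximal ideals containing $a$, and an ideal $I$ is a $z$-ideal if $M(a)\subseteq I$ for all $a\in I$. *)

(* Defs.v *)
From HB Require Import structures.
From mathcomp Require Import all_boot all_order all_algebra.
From mathcomp Require Import all_classical all_reals all_analysis.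
Set Implicit Arguments. Unset Strict Implicit. Unset Printing Implicit Defensive.
Import Order.TTheory GRing.Theory Num.Theory.
Import numFieldNormedType.Exports.
Local Open Scope classical_set_scope.
Local Open Scope ring_scope.

Section Tpp.
Variables (R : realType) (X : topologicalType).

Definition cozero (h : X -> R) : set X := [set x | h x != 0].

Definition Zset (f : X -> R) : set X := [set x | f x = 0].

Definition Tpp : set (X -> R) :=
  [set f | exists h : X -> R, continuous h /\ dense (cozero h) /\
           {within cozero h, continuous f}].

Definition is_ideal (I : set (X -> R)) : Prop :=
  [/\ I `<=` Tpp,
      I (fun _ => 0),
      (forall f g, I f -> I g -> I (f \- g)) &
      (forall f g, Tpp f -> I g -> I (f \* g))].

Definition is_maximal_ideal (M : set (X -> R)) : Prop :=
  [/\ is_ideal M, M != Tpp &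
      forall J, is_ideal J -> M `<=` J -> J != Tpp -> J = M].

Definition Mof (a : X -> R) : set (X -> R) :=
  [set f | Tpp f /\ forall M, is_maximal_ideal M -> M a -> M f].

Definition is_z_ideal (I : set (X -> R)) : Prop :=
  forall a, I a -> Mof a `<=` I.

End Tpp.

(* Main.v *)
Require Import Defs.
From HB Require Import structures.
From mathcomp Require Import all_boot all_order all_algebra.
From mathcomp Require Import all_classical all_reals all_analysis.
Import Order.TTheory GRing.Theory Num.Theory.
Import numFieldNormedType.Exports.
Local Open Scope classical_set_scope.
Local Open Scope ring_scope.

Section Aux.
Variables (R : realType) (X : topologicalType).
Implicit Types (f g h : X -> R).

Lemma cozero_open h : continuous h -> open (cozero h).
Proof. by move=> hc; exact: ((continuousP _).1 hc _ (@open_neq R 0)). Qed.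

Lemma Tpp2 f g : Tpp f -> Tpp g -> exists h, continuous h /\ dense (cozero h)
  /\ {within cozero h, continuous f} /\ {within cozero h, continuous g}.
Proof.
move=> [h1 [c1 [d1 w1]]] [h2 [c2 [d2 w2]]].
have E : cozero (h1 \* h2) = cozero h1 `&` cozero h2.
  apply/seteqP; split => x; rewrite /cozero /=.
    by rewrite mulf_eq0 negb_or => /andP.
  by move=> [a b]; rewrite mulf_neq0.
exists (h1 \* h2); split; first by move=> x; exact: (continuousM (c1 x) (c2 x)).
rewrite E; split; first by apply: denseI => //; exact: cozero_open.
split; [exact: continuous_subspaceW w1|exact: continuous_subspaceW w2].
Qed.

Lemma TppB f g : Tpp f -> Tpp g -> Tpp (f \- g).
Proof.
move=> /Tpp2 H /H [h [c [d [w1 w2]]]]; exists h; split => // ; split => // x.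
exact: (continuousB (w1 x) (w2 x)).
Qed.

Lemma TppD f g : Tpp f -> Tpp g -> Tpp (f \+ g).
Proof.
move=> /Tpp2 H /H [h [c [d [w1 w2]]]]; exists h; split => // ; split => // x.
exact: (continuousD (w1 x) (w2 x)).
Qed.

Lemma TppM f g : Tpp f -> Tpp g -> Tpp (f \* g).
Proof.
move=> /Tpp2 H /H [h [c [d [w1 w2]]]]; exists h; split => // ; split => // x.
exact: (continuousM (w1 x) (w2 x)).
Qed.

Lemma TppC (c : R) : Tpp (fun _ : X => c).
Proof.
exists (fun _ => 1); split; first exact: cst_continuous.
split; last exact: cst_continuous.
have -> : cozero (fun _ : X => (1 : R)) = setT.
  by apply/seteqP; split => x //= _; rewrite /cozero /= oner_neq0.
by move=> O O0 _; rewrite setIT.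
Qed.

Lemma TppV f : Tpp f -> (forall x, f x != 0) -> Tpp (fun x => (f x)^-1).
Proof.
move=> [h [c [d w]]] nz; exists h; split => //; split => // x.
exact: (continuousV (nz x) (w x)).
Qed.

Notation TT := (@Tpp R X).
Implicit Types (I J M : set (X -> R)).

Lemma ideal_sub {I} : is_ideal I -> I `<=` TT.
Proof. by case. Qed.

Lemma ideal0 {I} : is_ideal I -> I (fun _ => 0).
Proof. by case. Qed.
Lemma idealB {I f g} : is_ideal I -> I f -> I g -> I (f \- g).
Proof. by case=> _ _ H _; apply: H. Qed.
Lemma idealM {I f g} : is_ideal I -> TT f -> I g -> I (f \* g).
Proof. by case=> _ _ _ H; apply: H. Qed.

Lemma ideal_add {I f g} : is_ideal I -> I f -> I g -> I (f \+ g).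
Proof.
move=> hI If Ig.
have -> : f \+ g = f \- ((fun _ => 0) \- g) by apply/funext => x /=; rewrite sub0r opprK.
by apply: (idealB hI) => //; apply: (idealB hI) => //; exact: ideal0.
Qed.

Lemma ideal_one {I} : is_ideal I -> I (fun _ => 1) -> I = TT.
Proof.
move=> hI I1; apply/seteqP; split; first exact: ideal_sub.
move=> t Tt; have := idealM hI Tt I1.
by have -> : t \* (fun _ => 1) = t by apply/funext => x /=; rewrite mulr1.
Qed.

Definition Mx (x : X) : set (X -> R) := [set f | TT f /\ f x = 0].

Lemma Mx_max x : is_maximal_ideal (Mx x).
Proof.
have hM : is_ideal (Mx x).
  split.
  - by move=> f [].
  - by split; [exact: TppC|].
  - by move=> f g [Tf fx] [Tg gx]; split; [exact: TppB|rewrite /= fx gx subr0].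
  - by move=> f g Tf [Tg gx]; split; [exact: TppM|rewrite /= gx mulr0].
split => //.
  apply/eqP => E; have := TppC 1; rewrite -E => -[_ /eqP].
  by rewrite oner_eq0.
move=> J hJ MJ JnT; apply/seteqP; split => //.
move=> j Jj; split; first exact: (ideal_sub hJ _ Jj).
apply/eqP/negP => jx.
have Tj := ideal_sub hJ _ Jj.
have Jc : J (fun _ => j x).
  have M1 : Mx x (j \- (fun _ => j x)).
    by split; [apply: TppB => //; exact: TppC|rewrite /= subrr].
  have := idealB hJ Jj (MJ _ M1).
  by have -> : j \- (j \- (fun _ => j x)) = (fun _ => j x)
    by apply/funext => y /=; rewrite subKr.
have J1 : J (fun _ => 1).
  have := idealM hJ (TppC (j x)^-1) Jc.
  by have -> : (fun _ => (j x)^-1) \* (fun _ => j x) = (fun _ : X => 1)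
    by apply/funext => y /=; rewrite mulVf //; apply/negP.
by move: JnT; rewrite (ideal_one hJ J1) eqxx.
Qed.

End Aux.
Arguments Mx {R X}.
Arguments Mx_max {R X}.
Arguments TppC {R X}.
Arguments ideal_sub {R X I}.
Arguments ideal0 {R X I}.
Arguments idealB {R X I f g}.
Arguments idealM {R X I f g}.
Arguments ideal_add {R X I f g}.
Arguments ideal_one {R X I}.
Arguments TppB {R X f g}.
Arguments TppD {R X f g}.
Arguments TppM {R X f g}.
Arguments TppV {R X f}.

Theorem corollary5p2 (R : realType) (X : topologicalType)
  (hT1 : @accessible_space X) (I : set (X -> R)) (hI : is_ideal I) :
  is_z_ideal I <->
  (forall f g : X -> R, Tpp f -> I g -> Zset g `<=` Zset f -> I f).
Proof.
split; last first.
  move=> H a Ia f [Tf Mf]; apply: (H f a Tf Ia) => x ax.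
  have := Mf _ (Mx_max x); rewrite /Mx /=.
  by move=> /(_ (conj (ideal_sub hI _ Ia) ax)) [].
move=> Hz f g Tf Ig Zgf; apply: (Hz g Ig); split => // M maxM Mg.
have [hM MnT Mmax] := maxM.
have Tg := ideal_sub hI _ Ig.
have [//|nMf] := pselect (M f).
pose J : set (X -> R) := [set k | exists m t, [/\ M m, Tpp t & k = m \+ t \* f]].
have hJ : is_ideal J.
  split.
  - move=> k [m [t [Mm Tt ->]]]; apply: TppD; first exact: (ideal_sub hM _ Mm).
    exact: TppM Tt Tf.
  - exists (fun _ => 0), (fun _ => 0); split; [exact: ideal0 hM|exact: TppC|].
    by apply/funext => x /=; rewrite mul0r addr0.
  - move=> k1 k2 [m1 [t1 [M1 T1 ->]]] [m2 [t2 [M2 T2 ->]]].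
    exists (m1 \- m2), (t1 \- t2); split; [exact: idealB hM M1 M2|exact: TppB T1 T2|].
    by apply/funext => x /=; rewrite mulrBl; rewrite addrACA opprD.
  - move=> s k Ts [m [t [Mm Tt ->]]].
    exists (s \* m), (s \* t); split; [exact: idealM hM Ts Mm|exact: TppM Ts Tt|].
    by apply/funext => x /=; rewrite mulrDr mulrA.
have MJ : M `<=` J.
  move=> m Mm; exists m, (fun _ => 0); split => //; first exact: TppC.
  by apply/funext => x /=; rewrite mul0r addr0.
have Jf : J f.
  exists (fun _ => 0), (fun _ => 1); split; [exact: ideal0 hM|exact: TppC|].
  by apply/funext => x /=; rewrite mul1r add0r.
case: (eqVneq J (@Tpp R X)) => [JT|JnT]; last first.
  by have := Mmax J hJ MJ JnT => E; rewrite E in Jf.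
have [m [t [Mm Tt E1]]] : J (fun _ => 1) by rewrite JT; exact: TppC.
have Tm := ideal_sub hM _ Mm.
pose u := (m \* m) \+ (g \* g).
have Mu : M u.
  by apply: (ideal_add hM); [exact: idealM hM Tm Mm|exact: idealM hM Tg Mg].
have upos : forall x, u x != 0.
  move=> x; rewrite /u /=.
  have e1 := congr1 (fun k => k x) E1; rewrite /= in e1.
  have [gx0|gxn] := eqVneq (g x) 0.
    have fx0 : f x = 0 by exact: Zgf.
    by rewrite fx0 mulr0 addr0 in e1; rewrite -e1 mul1r gx0 mulr0 addr0 oner_neq0.
  rewrite lt0r_neq0 // ltr_wpDl //; first by rewrite -expr2 sqr_ge0.
  by rewrite -expr2 exprn_even_gt0.
pose v := fun x => (u x)^-1.
have Tv : Tpp v.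
  apply: TppV upos; apply: TppD; [exact: (TppM Tm Tm)|exact: (TppM Tg Tg)].
have M1 : M (fun _ => 1).
  have := idealM hM Tv Mu.
  by have -> : v \* u = (fun _ => 1) by apply/funext => x /=; rewrite mulVf.
by move: MnT; rewrite (ideal_one hM M1) eqxx.
Qed.
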